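(* Let $A=(a_1\ a_2\ a_3\ a_4)$ be a matrix of positive integers and $A'=(a_1\ a_2\ a_3)$, where the toric ideal of $A'$ is not a complete intersection and there exists $x\in\mathbb N\{a_1,a_2,a_3\}\cap a_4\mathbb N$ with $x\mathbb Z=\mathbb Z\{a_1,a_2,a_3\}\cap a_4\mathbb Z$. Let $M'=\{g_1'=(-c_1,v_{12},v_{13}),\,g_2'=(v_{21},-c_2,v_{23}),\,g_3'=(v_{31},v_{32},-c_3)\}$ be the minimal Markov basis of $A'$ (all $c_i,v_{ij}$ positive integers), and let $M=\{g_1=(g_1',0),g_2=(g_2',0),g_3=(g_3',0),h=(h_1,h_2,h_3,-h_4)\}$ be a minimal Markov basis of $A$ with $h_1,h_2,h_3\ge0$, $h_4>0$. If $M$ reduces the distance of the circuits of $A$, then $M'$ reduces the distance of the circuits of $A'$.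
   Context: For $z\in\mathbb Z^n$, $z^\pm\in\mathbb N^n$ are the unique vectors with disjoint supports and $z=z^+-z^-$; $\|\cdot\|$ is the $1$-norm. The toric ideal of a matrix $C$ is $I_C=\langle x^{u^+}-x^{u^-}:u\in\ker(C)\rangle$; it is a complete intersection if generated by $\dim\ker(C)$ elements. A Markov basis is a set $B\subseteq\ker(C)$ whose binomials generate $I_C$; minimal means no proper subset is one. For nonzero $z\in\ker(C)$, $u\in\ker(C)$ reduces the distance of $z$ if there exist $(p,q)\in\{(z^+,z^-),(z^-,z^+)\}$ and $\varepsilon\in\{\pm1\}$ with $p+\varepsilon u\in\mathbb N^n$ and $\|p+\varepsilon u-q\|<\|z\|$; $B$ reduces the distance of $Z$ if each nonzero $z\in Z$ has its distance reduced by some element of $B$. A circuit of $C$ is a nonzero element of $\ker(C)$ with support of size exactly two. *)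

(* Defs.v *)
From HB Require Import structures.
From mathcomp Require Import all_boot all_order all_algebra.
From mathcomp Require Import mpoly.
Set Implicit Arguments. Unset Strict Implicit. Unset Printing Implicit Defensive.
Import Order.TTheory GRing.Theory Num.Theory.
Local Open Scope ring_scope.

Definition inker (d n : nat) (C : 'M[int]_(d, n)) (z : 'rV[int]_n) : Prop :=
  C *m z^T = 0.

Definition posp (x : int) : nat := match x with Posz k => k | Negz _ => 0%N end.
Definition negp (x : int) : nat := posp (- x).

Definition vpos (n : nat) (z : 'rV[int]_n) : 'rV[int]_n := \row_i ((posp (z 0 i))%:Z).
Definition vneg (n : nat) (z : 'rV[int]_n) : 'rV[int]_n := \row_i ((negp (z 0 i))%:Z).

Definition norm1 (n : nat) (z : 'rV[int]_n) : int := \sum_(i < n) `|z 0 i|.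

Definition mpos (n : nat) (z : 'rV[int]_n) : 'X_{1..n} := [multinom posp (z ord0 i) | i < n].
Definition mneg (n : nat) (z : 'rV[int]_n) : 'X_{1..n} := [multinom negp (z ord0 i) | i < n].
Definition binom (K : fieldType) (n : nat) (z : 'rV[int]_n) : {mpoly K[n]} :=
  'X_[mpos z] - 'X_[mneg z].

Definition in_ideal (K : fieldType) (n : nat) (S : {mpoly K[n]} -> Prop)
    (p : {mpoly K[n]}) : Prop :=
  exists s : seq ({mpoly K[n]} * {mpoly K[n]}),
    (forall q, q \in s -> S q.2) /\ p = \sum_(q <- s) q.1 * q.2.
Arguments in_ideal K {n} S p.

Definition toric_gens (K : fieldType) (d n : nat) (C : 'M[int]_(d, n))
    (f : {mpoly K[n]}) : Prop :=
  exists u, inker C u /\ f = binom K u.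
Arguments toric_gens K {d n} C f.

Definition generates_toric (K : fieldType) (d n : nat) (C : 'M[int]_(d, n))
    (S : {mpoly K[n]} -> Prop) : Prop :=
  forall p, in_ideal K (toric_gens K C) p <-> in_ideal K S p.
Arguments generates_toric K {d n} C S.

(* dim ker(C) (rank of the lattice ker(C), i.e. dimension of its Q-span) *)
Definition kerdim (d n : nat) (C : 'M[int]_(d, n)) : nat :=
  (n - \rank (map_mx (intr : int -> rat) C))%N.

Definition complete_intersection (K : fieldType) (d n : nat) (C : 'M[int]_(d, n)) : Prop :=
  exists G : seq {mpoly K[n]},
    size G = kerdim C /\ generates_toric K C (fun f => f \in G).
Arguments complete_intersection K {d n} C.

Definition markov_basis (K : fieldType) (d n : nat) (C : 'M[int]_(d, n))
    (B : 'rV[int]_n -> Prop) : Prop :=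
  (forall u, B u -> inker C u) /\
  generates_toric K C (fun f => exists u, B u /\ f = binom K u).
Arguments markov_basis K {d n} C B.

Definition minimal_markov_basis (K : fieldType) (d n : nat) (C : 'M[int]_(d, n))
    (B : 'rV[int]_n -> Prop) : Prop :=
  markov_basis K C B /\
  forall B' : 'rV[int]_n -> Prop,
    (forall u, B' u -> B u) -> (exists u, B u /\ ~ B' u) -> ~ markov_basis K C B'.
Arguments minimal_markov_basis K {d n} C B.

Definition reduces (n : nat) (u z : 'rV[int]_n) : Prop :=
  exists p q : 'rV[int]_n,
    ((p, q) = (vpos z, vneg z) \/ (p, q) = (vneg z, vpos z)) /\
    exists e : int, (e = 1 \/ e = -1) /\
      (forall i, 0 <= (p + e *: u) 0 i) /\
      norm1 (p + e *: u - q) < norm1 z.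

Definition reduces_dist (n : nat) (B Z : 'rV[int]_n -> Prop) : Prop :=
  forall z, Z z -> z != 0 -> exists u, B u /\ reduces u z.

Definition circuit (d n : nat) (C : 'M[int]_(d, n)) (z : 'rV[int]_n) : Prop :=
  inker C z /\ z != 0 /\ #|[set i | z 0 i != 0]| = 2%N.

Definition vec3 (x1 x2 x3 : int) : 'rV[int]_3 := \row_(i < 3) [:: x1; x2; x3]`_i.
Definition vec4 (x1 x2 x3 x4 : int) : 'rV[int]_4 := \row_(i < 4) [:: x1; x2; x3; x4]`_i.

(* Main.v *)
Require Import Defs.
From HB Require Import structures.
From mathcomp Require Import all_boot all_order all_algebra.
From mathcomp Require Import mpoly.
From mathcomp Require Import zify.
Import Order.TTheory GRing.Theory Num.Theory.
Local Open Scope ring_scope.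


Lemma pospE x : (posp x)%:Z = Num.max x 0.
Proof. case: x => n /=; lia. Qed.
Lemma negpE x : (negp x)%:Z = Num.max (- x) 0.
Proof. by rewrite /negp pospE. Qed.

Definition P (b : bool) (x : int) : int := if b then Num.max x 0 else Num.max (- x) 0.

Definition R3 (u1 u2 u3 z1 z2 z3 : int) : Prop :=
  exists (b : bool) (e : int), (e = 1 \/ e = -1) /\
   [/\ 0 <= P b z1 + e * u1, 0 <= P b z2 + e * u2 & 0 <= P b z3 + e * u3] /\
   `|P b z1 + e * u1 - P (~~ b) z1| + `|P b z2 + e * u2 - P (~~ b) z2|
   + `|P b z3 + e * u3 - P (~~ b) z3| < `|z1| + `|z2| + `|z3|.

Definition R4 (u1 u2 u3 u4 z1 z2 z3 z4 : int) : Prop :=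
  exists (b : bool) (e : int), (e = 1 \/ e = -1) /\
   [/\ 0 <= P b z1 + e * u1, 0 <= P b z2 + e * u2, 0 <= P b z3 + e * u3
     & 0 <= P b z4 + e * u4] /\
   `|P b z1 + e * u1 - P (~~ b) z1| + `|P b z2 + e * u2 - P (~~ b) z2|
   + `|P b z3 + e * u3 - P (~~ b) z3| + `|P b z4 + e * u4 - P (~~ b) z4|
    < `|z1| + `|z2| + `|z3| + `|z4|.

Lemma vec3E (x1 x2 x3 : int) (i : 'I_3) :
  vec3 x1 x2 x3 0 i = [:: x1; x2; x3]`_i.
Proof. by rewrite mxE. Qed.

Lemma reduces3E u1 u2 u3 z1 z2 z3 :
  reduces (vec3 u1 u2 u3) (vec3 z1 z2 z3) <-> R3 u1 u2 u3 z1 z2 z3.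
Proof.
have nE : forall (y : 'rV[int]_3), norm1 y = `|y 0 0| + `|y 0 1| + `|y 0 2%:R|.
  move=> y; rewrite /norm1 !big_ord_recr big_ord0 /= add0r.
  by congr (_ + _ + _); congr (`|y 0 _|); apply: val_inj.
split.
- case=> p [q [Hpq [e [He [Hge Hn]]]]].
  have [b [Ep Eq]] : exists b, p = \row_i P b (vec3 z1 z2 z3 0 i) /\
                           q = \row_i P (~~ b) (vec3 z1 z2 z3 0 i).
    case: Hpq => [[-> ->]|[-> ->]]; [exists true|exists false];
      by split; apply/rowP => i; rewrite !mxE /= ?pospE ?negpE.
  subst p q.
  exists b, e; split=> //; split.
    split; [move: (Hge 0)|move: (Hge 1)|move: (Hge 2%:R)]; by rewrite !mxE.
  by move: Hn; rewrite !nE !mxE.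
- case=> b [e [He [[H1 H2 H3] Hn]]].
  exists (\row_i P b (vec3 z1 z2 z3 0 i)), (\row_i P (~~ b) (vec3 z1 z2 z3 0 i)).
  split.
    case: b {H1 H2 H3 Hn}; [left|right]; congr pair; apply/rowP => i;
      by rewrite !mxE /= ?pospE ?negpE.
  exists e; split=> //; split.
    by move=> i; rewrite !mxE; case: i => [[|[|[|]]]] //= _.
  by rewrite !nE !mxE.
Qed.

Lemma reduces4E u1 u2 u3 u4 z1 z2 z3 z4 :
  reduces (vec4 u1 u2 u3 u4) (vec4 z1 z2 z3 z4) <-> R4 u1 u2 u3 u4 z1 z2 z3 z4.
Proof.
have nE : forall (y : 'rV[int]_4),
    norm1 y = `|y 0 0| + `|y 0 1| + `|y 0 2%:R| + `|y 0 3%:R|.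
  move=> y; rewrite /norm1 !big_ord_recr big_ord0 /= add0r.
  by congr (_ + _ + _ + _); congr (`|y 0 _|); apply: val_inj.
split.
- case=> p [q [Hpq [e [He [Hge Hn]]]]].
  have [b [Ep Eq]] : exists b, p = \row_i P b (vec4 z1 z2 z3 z4 0 i) /\
                           q = \row_i P (~~ b) (vec4 z1 z2 z3 z4 0 i).
    case: Hpq => [[-> ->]|[-> ->]]; [exists true|exists false];
      by split; apply/rowP => i; rewrite !mxE /= ?pospE ?negpE.
  subst p q.
  exists b, e; split=> //; split.
    split; [move: (Hge 0)|move: (Hge 1)|move: (Hge 2%:R)|move: (Hge 3%:R)];
      by rewrite !mxE.
  by move: Hn; rewrite !nE !mxE.
- case=> b [e [He [[H1 H2 H3 H4] Hn]]].
  exists (\row_i P b (vec4 z1 z2 z3 z4 0 i)), (\row_i P (~~ b) (vec4 z1 z2 z3 z4 0 i)).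
  split.
    case: b {H1 H2 H3 H4 Hn}; [left|right]; congr pair; apply/rowP => i;
      by rewrite !mxE /= ?pospE ?negpE.
  exists e; split=> //; split.
    by move=> i; rewrite !mxE; case: i => [[|[|[|[|]]]]] //= _.
  by rewrite !nE !mxE.
Qed.

Lemma row3E (z : 'rV[int]_3) : z = vec3 (z 0 0) (z 0 1) (z 0 2%:R).
Proof.
by apply/rowP => i; rewrite /vec3 !mxE; case: i => [[|[|[|]]]] //= Hi;
  congr (z 0 _); apply: val_inj.
Qed.

Lemma inker3E (b1 b2 b3 x1 x2 x3 : int) :
  inker (vec3 b1 b2 b3) (vec3 x1 x2 x3) <-> b1 * x1 + b2 * x2 + b3 * x3 = 0.
Proof.
rewrite /inker; split.
- move/matrixP => /(_ 0 0); rewrite !mxE !big_ord_recr big_ord0 /= !mxE /= add0r.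
  by [].
- move=> H; apply/matrixP => i j; rewrite !ord1 !mxE !big_ord_recr big_ord0 /= !mxE /= add0r.
  by [].
Qed.

Lemma inker4E (b1 b2 b3 b4 x1 x2 x3 x4 : int) :
  inker (vec4 b1 b2 b3 b4) (vec4 x1 x2 x3 x4) <->
  b1 * x1 + b2 * x2 + b3 * x3 + b4 * x4 = 0.
Proof.
rewrite /inker; split.
- move/matrixP => /(_ 0 0); rewrite !mxE !big_ord_recr big_ord0 /= !mxE /= add0r.
  by [].
- move=> H; apply/matrixP => i j; rewrite !ord1 !mxE !big_ord_recr big_ord0 /= !mxE /= add0r.
  by [].
Qed.

Lemma card3E (x1 x2 x3 : int) :
  #|[set i | vec3 x1 x2 x3 0 i != 0]| = ((x1 != 0) + (x2 != 0) + (x3 != 0))%N.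
Proof.
rewrite cardsE -sum1_card big_mkcond /= !big_ord_recr big_ord0 /=.
rewrite /vec3 /vec4 !unfold_in !mxE /=.
by case: (x1 != 0); case: (x2 != 0); case: (x3 != 0).
Qed.

Lemma card4E (x1 x2 x3 x4 : int) :
  #|[set i | vec4 x1 x2 x3 x4 0 i != 0]| =
  ((x1 != 0) + (x2 != 0) + (x3 != 0) + (x4 != 0))%N.
Proof.
rewrite cardsE -sum1_card big_mkcond /= !big_ord_recr big_ord0 /=.
rewrite /vec3 /vec4 !unfold_in !mxE /=.
by case: (x1 != 0); case: (x2 != 0); case: (x3 != 0); case: (x4 != 0).
Qed.

Lemma vec3_eq0 (x1 x2 x3 : int) : (vec3 x1 x2 x3 == 0) = [&& x1 == 0, x2 == 0 & x3 == 0].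
Proof.
apply/eqP/and3P.
- by move/rowP => H; move: (H 0) (H 1) (H 2%:R); rewrite /vec3 !mxE /= => -> -> ->.
- case=> /eqP-> /eqP-> /eqP->; apply/rowP => i; rewrite !mxE.
  by case: i => [[|[|[|]]]].
Qed.

Lemma vec4_eq0 (x1 x2 x3 x4 : int) :
  (vec4 x1 x2 x3 x4 == 0) = [&& x1 == 0, x2 == 0, x3 == 0 & x4 == 0].
Proof.
apply/eqP/and4P.
- by move/rowP => H; move: (H 0) (H 1) (H 2%:R) (H 3%:R); rewrite /vec4 !mxE /= => -> -> -> ->.
- case=> /eqP-> /eqP-> /eqP-> /eqP->; apply/rowP => i; rewrite !mxE.
  by case: i => [[|[|[|[|]]]]].
Qed.

Lemma coefMX0 (K : fieldType) n (p : {mpoly K[n]}) (a m : 'X_{1..n}) :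
  ~~ (a <= m)%MM -> (p * 'X_[a])@_m = 0.
Proof.
move=> Ha; rewrite mcoeffM big1 // => k /eqP Hm.
rewrite mcoeffX; case: eqP => [Ek|]; last by rewrite mulr0.
exfalso; move/negP: Ha; apply; apply/mnm_lepP => i.
have -> : m i = (k.1 + k.2)%MM i by rewrite -Hm.
by rewrite Ek mnmDE leq_addl.
Qed.

Lemma iso (K : fieldType) d n (C : 'M[int]_(d,n)) B z m :
  markov_basis K C B -> inker C z ->
  (mpos z == m) != (mneg z == m) ->
  (forall u, B u -> ~~ (mpos u <= m)%MM /\ ~~ (mneg u <= m)%MM) -> False.
Proof.
case=> _ Hgen Hz Hxor Hiso.
have : in_ideal K (toric_gens K C) (binom K z).
  exists [:: (1, binom K z)]; split.
    by move=> q; rewrite inE => /eqP -> /=; exists z.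
  by rewrite big_cons big_nil mul1r addr0.
move/Hgen => [s [Hs E]].
have := congr1 (mcoeff m) E.
rewrite raddf_sum /= big1_seq.
  rewrite /binom mcoeffB !mcoeffX.
  by move: Hxor; case: (mpos z == m); case: (mneg z == m) => //= _ /eqP;
    rewrite ?subr0 ?sub0r ?oppr_eq0 oner_eq0.
move=> q /andP [_ /Hs [u [Bu ->]]].
have [H1 H2] := Hiso u Bu.
by rewrite /binom mulrBr mcoeffB !coefMX0 // subrr.
Qed.

Lemma mpos3E x1 x2 x3 (i : 'I_3) : mpos (vec3 x1 x2 x3) i = posp [:: x1; x2; x3]`_i.
Proof. by rewrite /mpos mnmE /vec3 mxE. Qed.
Lemma mneg3E x1 x2 x3 (i : 'I_3) : mneg (vec3 x1 x2 x3) i = negp [:: x1; x2; x3]`_i.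
Proof. by rewrite /mneg mnmE /vec3 mxE. Qed.

Lemma notle n (m1 m2 : 'X_{1..n}) i : (m2 i < m1 i)%N -> ~~ (m1 <= m2)%MM.
Proof. by move=> H; apply/negP => /mnm_lepP /(_ i); rewrite leqNgt H. Qed.

Lemma posp_nat (n : nat) : posp n%:Z = n. Proof. by []. Qed.
Lemma negp_nat (n : nat) : negp (- n%:Z) = n. Proof. by rewrite /negp opprK. Qed.
Lemma posp_natN (n : nat) : posp (- n%:Z) = 0%N. Proof. by case: n. Qed.
Lemma negp_natP (n : nat) : negp n%:Z = 0%N. Proof. by case: n. Qed.
Lemma negp_ge0 x : 0 <= x -> negp x = 0%N.
Proof. by case: x => // n _; apply: negp_natP. Qed.
Lemma posp_le0 x : x <= 0 -> posp x = 0%N.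
Proof. by case: x => // n; case: n. Qed.
Lemma posp_gt0 x : 0 < x -> (0 < posp x)%N.
Proof. by case: x => // n. Qed.
Lemma negp_lt0 x : x < 0 -> (0 < negp x)%N.
Proof. by case: x => // n. Qed.

Ltac nlt := rewrite -ltz_nat ?pospE ?negpE; lia.

Lemma bound (K : fieldType) (a1 a2 a3 c1 c2 c3 v12 v13 v21 v23 v31 v32 : nat) :
  (0 < c1)%N -> (0 < c2)%N -> (0 < c3)%N ->
  (0 < v12)%N -> (0 < v13)%N -> (0 < v21)%N -> (0 < v23)%N ->
  (0 < v31)%N -> (0 < v32)%N ->
  markov_basis K (vec3 a1%:Z a2%:Z a3%:Z)
    (fun u => u = vec3 (- c1%:Z) v12%:Z v13%:Z \/ u = vec3 v21%:Z (- c2%:Z) v23%:Z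
              \/ u = vec3 v31%:Z v32%:Z (- c3%:Z)) ->
  forall x1 x2 x3, inker (vec3 a1%:Z a2%:Z a3%:Z) (vec3 x1 x2 x3) ->
  [/\ x1 < 0 -> 0 <= x2 -> 0 <= x3 -> c1%:Z <= - x1,
      x2 < 0 -> 0 <= x1 -> 0 <= x3 -> c2%:Z <= - x2 &
      x3 < 0 -> 0 <= x1 -> 0 <= x2 -> c3%:Z <= - x3].
Proof.
move=> hc1 hc2 hc3 h12 h13 h21 h23 h31 h32 HM x1 x2 x3 Hk.
have Hx : forall (i : 'I_3), [:: x1; x2; x3]`_i < 0 ->
   (forall j : 'I_3, j != i -> 0 <= [:: x1; x2; x3]`_j) ->
   (forall u, (u = vec3 (- c1%:Z) v12%:Z v13%:Z \/ u = vec3 v21%:Z (- c2%:Z) v23%:Z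
              \/ u = vec3 v31%:Z v32%:Z (- c3%:Z)) ->
      ~~ (mpos u <= mneg (vec3 x1 x2 x3))%MM /\ ~~ (mneg u <= mneg (vec3 x1 x2 x3))%MM) -> False.
  move=> i Hi Hj Hu; apply: (@iso K _ _ _ _ _ (mneg (vec3 x1 x2 x3)) HM Hk _ Hu).
  rewrite eqxx /=; apply/negP => /eqP /eqP E.
  have := congr1 (fun m : 'X_{1..3} => m i) E; rewrite /= mpos3E mneg3E.
  by rewrite posp_le0 ?ltW //; move/negp_lt0: Hi; case: (negp _).
split=> Hneg Hp1 Hp2; rewrite leNgt; apply/negP => Hlt.
- apply: (Hx 0) => //; first by case=> [[|[|[|]]]] //.
  move=> u [->|[->|->]]; split.
  + by apply: (@notle _ _ _ (1)); rewrite mpos3E mneg3E /=; nlt.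
  + by apply: (@notle _ _ _ (0)); rewrite mneg3E mneg3E /=; nlt.
  + by apply: (@notle _ _ _ (2%:R)); rewrite mpos3E mneg3E /=; nlt.
  + by apply: (@notle _ _ _ (1)); rewrite mneg3E mneg3E /=; nlt.
  + by apply: (@notle _ _ _ (1)); rewrite mpos3E mneg3E /=; nlt.
  + by apply: (@notle _ _ _ (2%:R)); rewrite mneg3E mneg3E /=; nlt.
- apply: (Hx 1) => //; first by case=> [[|[|[|]]]] //.
  move=> u [->|[->|->]]; split.
  + by apply: (@notle _ _ _ (2%:R)); rewrite mpos3E mneg3E /=; nlt.
  + by apply: (@notle _ _ _ (0)); rewrite mneg3E mneg3E /=; nlt.
  + by apply: (@notle _ _ _ (0)); rewrite mpos3E mneg3E /=; nlt.
  + by apply: (@notle _ _ _ (1)); rewrite mneg3E mneg3E /=; nlt.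
  + by apply: (@notle _ _ _ (0)); rewrite mpos3E mneg3E /=; nlt.
  + by apply: (@notle _ _ _ (2%:R)); rewrite mneg3E mneg3E /=; nlt.
- apply: (Hx 2%:R) => //; first by case=> [[|[|[|]]]] //.
  move=> u [->|[->|->]]; split.
  + by apply: (@notle _ _ _ (1)); rewrite mpos3E mneg3E /=; nlt.
  + by apply: (@notle _ _ _ (0)); rewrite mneg3E mneg3E /=; nlt.
  + by apply: (@notle _ _ _ (0)); rewrite mpos3E mneg3E /=; nlt.
  + by apply: (@notle _ _ _ (1)); rewrite mneg3E mneg3E /=; nlt.
  + by apply: (@notle _ _ _ (0)); rewrite mpos3E mneg3E /=; nlt.
  + by apply: (@notle _ _ _ (2%:R)); rewrite mneg3E mneg3E /=; nlt.
Qed.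


Ltac d4 H := let e := fresh "e" in let He := fresh "He" in
  destruct H as [[|] [e [[He|He] [[? ? ? ?] ?]]]]; subst e; unfold P in *; simpl in *; lia.

Lemma core1 (a1 a4 c1 c2 c3 v12 v13 v21 v23 v31 v32 h1 h2 h3 h4 x1 x2 x3 : int) :
 0 < a1 -> 0 < a4 -> 0 < c1 -> 0 < c2 -> 0 < c3 -> 0 < v12 -> 0 < v13 -> 0 < v21 ->
 0 < v23 -> 0 < v31 -> 0 < v32 -> 0 <= h1 -> 0 <= h2 -> 0 <= h3 -> 0 < h4 ->
 h1 = 0 -> h4 < h1 + h2 + h3 ->
 (R4 (-c1) v12 v13 0 a4 0 0 (-a1) \/ R4 v21 (-c2) v23 0 a4 0 0 (-a1) \/
  R4 v31 v32 (-c3) 0 a4 0 0 (-a1) \/ R4 h1 h2 h3 (-h4) a4 0 0 (-a1)) ->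
 x1 != 0 -> c1 <= `|x1| -> (x2 = 0 \/ x3 = 0) ->
 (0 < x1 -> x2 <= 0 /\ x3 <= 0) -> (x1 < 0 -> 0 <= x2 /\ 0 <= x3) ->
 R3 (-c1) v12 v13 x1 x2 x3.
Proof.
intros until 17; intros Hw; intros.
have Hv : v12 + v13 < c1.
  by case: Hw => [Hq|[Hq|[Hq|Hq]]]; d4 Hq.
exists (0 < x1), 1; split; first by left.
case: (ltrP 0 x1) => Hx /=; rewrite /P; split; try split; lia.
Qed.

Lemma core2 (a2 a4 c1 c2 c3 v12 v13 v21 v23 v31 v32 h1 h2 h3 h4 x1 x2 x3 : int) :
 0 < a2 -> 0 < a4 -> 0 < c1 -> 0 < c2 -> 0 < c3 -> 0 < v12 -> 0 < v13 -> 0 < v21 ->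
 0 < v23 -> 0 < v31 -> 0 < v32 -> 0 <= h1 -> 0 <= h2 -> 0 <= h3 -> 0 < h4 ->
 h2 = 0 -> h4 < h1 + h2 + h3 ->
 (R4 (-c1) v12 v13 0 0 a4 0 (-a2) \/ R4 v21 (-c2) v23 0 0 a4 0 (-a2) \/
  R4 v31 v32 (-c3) 0 0 a4 0 (-a2) \/ R4 h1 h2 h3 (-h4) 0 a4 0 (-a2)) ->
 x2 != 0 -> c2 <= `|x2| -> (x1 = 0 \/ x3 = 0) ->
 (0 < x2 -> x1 <= 0 /\ x3 <= 0) -> (x2 < 0 -> 0 <= x1 /\ 0 <= x3) ->
 R3 v21 (-c2) v23 x1 x2 x3.
Proof.
intros until 17; intros Hw; intros.
have Hv : v21 + v23 < c2.
  by case: Hw => [Hq|[Hq|[Hq|Hq]]]; d4 Hq.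
exists (0 < x2), 1; split; first by left.
case: (ltrP 0 x2) => Hx /=; rewrite /P; split; try split; lia.
Qed.

Lemma core3 (a3 a4 c1 c2 c3 v12 v13 v21 v23 v31 v32 h1 h2 h3 h4 x1 x2 x3 : int) :
 0 < a3 -> 0 < a4 -> 0 < c1 -> 0 < c2 -> 0 < c3 -> 0 < v12 -> 0 < v13 -> 0 < v21 ->
 0 < v23 -> 0 < v31 -> 0 < v32 -> 0 <= h1 -> 0 <= h2 -> 0 <= h3 -> 0 < h4 ->
 h3 = 0 -> h4 < h1 + h2 + h3 ->
 (R4 (-c1) v12 v13 0 0 0 a4 (-a3) \/ R4 v21 (-c2) v23 0 0 0 a4 (-a3) \/
  R4 v31 v32 (-c3) 0 0 0 a4 (-a3) \/ R4 h1 h2 h3 (-h4) 0 0 a4 (-a3)) ->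
 x3 != 0 -> c3 <= `|x3| -> (x1 = 0 \/ x2 = 0) ->
 (0 < x3 -> x1 <= 0 /\ x2 <= 0) -> (x3 < 0 -> 0 <= x1 /\ 0 <= x2) ->
 R3 v31 v32 (-c3) x1 x2 x3.
Proof.
intros until 17; intros Hw; intros.
have Hv : v31 + v32 < c3.
  by case: Hw => [Hq|[Hq|[Hq|Hq]]]; d4 Hq.
exists (0 < x3), 1; split; first by left.
case: (ltrP 0 x3) => Hx /=; rewrite /P; split; try split; lia.
Qed.

Lemma hz (h1 h2 h3 h4 x1 x2 x3 : int) :
  0 <= h1 -> 0 <= h2 -> 0 <= h3 -> 0 < h4 ->
  (0 < x1 \/ 0 < x2 \/ 0 < x3) -> (x1 < 0 \/ x2 < 0 \/ x3 < 0) ->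
  R4 h1 h2 h3 (-h4) x1 x2 x3 0 ->
  h4 < h1 + h2 + h3 /\
  ((x1 != 0 /\ h1 = 0) \/ (x2 != 0 /\ h2 = 0) \/ (x3 != 0 /\ h3 = 0)).
Proof.
move=> ? ? ? ? ? ? Hq.
destruct Hq as [[|] [e [[He|He] [[? ? ? ?] ?]]]]; subst e; unfold P in *; simpl in *; lia.
Qed.

Lemma r43 (u1 u2 u3 z1 z2 z3 : int) :
  R4 u1 u2 u3 0 z1 z2 z3 0 -> R3 u1 u2 u3 z1 z2 z3.
Proof.
case=> b [e [He [[H1 H2 H3 H4] Hn]]]; exists b, e; split=> //; split=> //.
by move: H1 H2 H3 H4 Hn; rewrite /P; case: b => /=; lia.
Qed.

Lemma signs (a1 a2 a3 x1 x2 x3 : int) : 0 < a1 -> 0 < a2 -> 0 < a3 ->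
  a1 * x1 + a2 * x2 + a3 * x3 = 0 -> ~ (x1 = 0 /\ x2 = 0 /\ x3 = 0) ->
  (0 < x1 \/ 0 < x2 \/ 0 < x3) /\ (x1 < 0 \/ x2 < 0 \/ x3 < 0).
Proof.
move=> ha1 ha2 ha3 E Hn.
have s : forall a x : int, 0 < a -> [/\ 0 < x -> 0 < a * x, x < 0 -> a * x < 0
                                  & x = 0 -> a * x = 0].
  move=> a x ha; split=> hx; first exact: mulr_gt0.
    by rewrite pmulr_rlt0.
  by rewrite hx mulr0.
have [? ? ?] := s _ x1 ha1; have [? ? ?] := s _ x2 ha2; have [? ? ?] := s _ x3 ha3.
lia.
Qed.


Theorem proposition6p7 (K : fieldType) (a1 a2 a3 a4 : nat)
  (c1 c2 c3 v12 v13 v21 v23 v31 v32 h1 h2 h3 h4 : nat) :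
  (0 < a1)%N -> (0 < a2)%N -> (0 < a3)%N -> (0 < a4)%N ->
  let A := vec4 a1%:Z a2%:Z a3%:Z a4%:Z in
  let A' := vec3 a1%:Z a2%:Z a3%:Z in
  ~ complete_intersection K A' ->
  (exists x : int,
      (exists n1 n2 n3 : nat, x = (n1 * a1 + n2 * a2 + n3 * a3)%N%:Z) /\
      (exists m : nat, x = (a4 * m)%N%:Z) /\
      (forall z : int,
         (exists k : int, z = x * k) <->
         ((exists z1 z2 z3 : int, z = z1 * a1%:Z + z2 * a2%:Z + z3 * a3%:Z) /\
          (exists k : int, z = a4%:Z * k)))) ->
  (0 < c1)%N -> (0 < c2)%N -> (0 < c3)%N ->
  (0 < v12)%N -> (0 < v13)%N -> (0 < v21)%N -> (0 < v23)%N ->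
  (0 < v31)%N -> (0 < v32)%N ->
  let g1' := vec3 (- c1%:Z) v12%:Z v13%:Z in
  let g2' := vec3 v21%:Z (- c2%:Z) v23%:Z in
  let g3' := vec3 v31%:Z v32%:Z (- c3%:Z) in
  let M' := fun u => u = g1' \/ u = g2' \/ u = g3' in
  minimal_markov_basis K A' M' ->
  (0 < h4)%N ->
  let g1 := vec4 (- c1%:Z) v12%:Z v13%:Z 0 in
  let g2 := vec4 v21%:Z (- c2%:Z) v23%:Z 0 in
  let g3 := vec4 v31%:Z v32%:Z (- c3%:Z) 0 in
  let h := vec4 h1%:Z h2%:Z h3%:Z (- h4%:Z) in
  let M := fun u => u = g1 \/ u = g2 \/ u = g3 \/ u = h in
  minimal_markov_basis K A M ->
  reduces_dist M (circuit A) ->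
  reduces_dist M' (circuit A').
Proof.
Proof.
move=> ha1 ha2 ha3 ha4 A A' _ _ hc1 hc2 hc3 h12 h13 h21 h23 h31 h32
  g1' g2' g3' M' HM' hh4 g1 g2 g3 h M HM Hred.
move=> z [Hk [Hnz Hcard]] _.
have [x1 [x2 [x3 Ez]]] : exists x1 x2 x3, z = vec3 x1 x2 x3.
  by exists (z 0 0), (z 0 1), (z 0 2%:R); exact: row3E.
subst z.
have Hk' := Hk.
rewrite /A' inker3E in Hk.
rewrite vec3_eq0 in Hnz.
rewrite card3E in Hcard.
have [Spos Sneg] : (0 < x1 \/ 0 < x2 \/ 0 < x3) /\ (x1 < 0 \/ x2 < 0 \/ x3 < 0).
  apply: (@signs a1%:Z a2%:Z a3%:Z x1 x2 x3) => //; try lia.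
have Hsup : x1 = 0 \/ x2 = 0 \/ x3 = 0.
  case: (eqVneq x1 0) => q1; [by left|]; case: (eqVneq x2 0) => q2; [by right; left|].
  case: (eqVneq x3 0) => q3; [by right; right|].
  by move: Hcard; rewrite q1 q2 q3.
have [B1 B2 B3] := @bound K a1 a2 a3 c1 c2 c3 v12 v13 v21 v23 v31 v32 hc1 hc2 hc3 h12 h13 h21 h23 h31 h32 (proj1 HM') _ _ _ Hk'.
have Hk'' : inker A' (vec3 (- x1) (- x2) (- x3)) by rewrite /A' inker3E; lia.
have [B1' B2' B3'] := @bound K a1 a2 a3 c1 c2 c3 v12 v13 v21 v23 v31 v32 hc1 hc2 hc3 h12 h13 h21 h23 h31 h32 (proj1 HM') _ _ _ Hk''.
have Bn1 : x1 != 0 -> c1%:Z <= `|x1| by clear -B1 B1' Spos Sneg Hsup; lia.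
have Bn2 : x2 != 0 -> c2%:Z <= `|x2| by clear -B2 B2' Spos Sneg Hsup; lia.
have Bn3 : x3 != 0 -> c3%:Z <= `|x3| by clear -B3 B3' Spos Sneg Hsup; lia.
have Sg1 : (0 < x1 -> x2 <= 0 /\ x3 <= 0) /\ (x1 < 0 -> 0 <= x2 /\ 0 <= x3)
  by clear -Spos Sneg Hsup; lia.
have Sg2 : (0 < x2 -> x1 <= 0 /\ x3 <= 0) /\ (x2 < 0 -> 0 <= x1 /\ 0 <= x3)
  by clear -Spos Sneg Hsup; lia.
have Sg3 : (0 < x3 -> x1 <= 0 /\ x2 <= 0) /\ (x3 < 0 -> 0 <= x1 /\ 0 <= x2)
  by clear -Spos Sneg Hsup; lia.
clear B1 B2 B3 B1' B2' B3' Hk''.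
have Hn4 : vec4 x1 x2 x3 0 != 0 by rewrite vec4_eq0; lia.
have Hc4 : circuit A (vec4 x1 x2 x3 0).
  split; first by rewrite /A inker4E; lia.
  by split=> //; rewrite card4E eqxx addn0.
have [u [Mu Hu]] := Hred _ Hc4 Hn4.
have W1 : R4 (- c1%:Z) v12%:Z v13%:Z 0 a4%:Z 0 0 (- a1%:Z) \/ R4 v21%:Z (- c2%:Z) v23%:Z 0 a4%:Z 0 0 (- a1%:Z) \/
    R4 v31%:Z v32%:Z (- c3%:Z) 0 a4%:Z 0 0 (- a1%:Z) \/ R4 h1%:Z h2%:Z h3%:Z (- h4%:Z) a4%:Z 0 0 (- a1%:Z).
  have Hn : vec4 a4%:Z 0 0 (- a1%:Z) != 0 by rewrite vec4_eq0; lia.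
  have Hc : circuit A (vec4 a4%:Z 0 0 (- a1%:Z)).
    split; first by rewrite /A inker4E; lia.
    split=> //; rewrite card4E.
    have ha : (a4%:Z != 0) by lia.
    have hb : (- a1%:Z != 0) by lia.
    by rewrite ha hb.
  have [u' [Mu' Hu']] := Hred _ Hc Hn.
  case: Mu' => [E|[E|[E|E]]]; subst u'; rewrite ?/g1 ?/g2 ?/g3 ?/h reduces4E in Hu'.
  - by left.
  - by right; left.
  - by right; right; left.
  - by right; right; right.
have W2 : R4 (- c1%:Z) v12%:Z v13%:Z 0 0 a4%:Z 0 (- a2%:Z) \/ R4 v21%:Z (- c2%:Z) v23%:Z 0 0 a4%:Z 0 (- a2%:Z) \/
    R4 v31%:Z v32%:Z (- c3%:Z) 0 0 a4%:Z 0 (- a2%:Z) \/ R4 h1%:Z h2%:Z h3%:Z (- h4%:Z) 0 a4%:Z 0 (- a2%:Z).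
  have Hn : vec4 0 a4%:Z 0 (- a2%:Z) != 0 by rewrite vec4_eq0; lia.
  have Hc : circuit A (vec4 0 a4%:Z 0 (- a2%:Z)).
    split; first by rewrite /A inker4E; lia.
    split=> //; rewrite card4E.
    have ha : (a4%:Z != 0) by lia.
    have hb : (- a2%:Z != 0) by lia.
    by rewrite ha hb.
  have [u' [Mu' Hu']] := Hred _ Hc Hn.
  case: Mu' => [E|[E|[E|E]]]; subst u'; rewrite ?/g1 ?/g2 ?/g3 ?/h reduces4E in Hu'.
  - by left.
  - by right; left.
  - by right; right; left.
  - by right; right; right.
have W3 : R4 (- c1%:Z) v12%:Z v13%:Z 0 0 0 a4%:Z (- a3%:Z) \/ R4 v21%:Z (- c2%:Z) v23%:Z 0 0 0 a4%:Z (- a3%:Z) \/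
    R4 v31%:Z v32%:Z (- c3%:Z) 0 0 0 a4%:Z (- a3%:Z) \/ R4 h1%:Z h2%:Z h3%:Z (- h4%:Z) 0 0 a4%:Z (- a3%:Z).
  have Hn : vec4 0 0 a4%:Z (- a3%:Z) != 0 by rewrite vec4_eq0; lia.
  have Hc : circuit A (vec4 0 0 a4%:Z (- a3%:Z)).
    split; first by rewrite /A inker4E; lia.
    split=> //; rewrite card4E.
    have ha : (a4%:Z != 0) by lia.
    have hb : (- a3%:Z != 0) by lia.
    by rewrite ha hb.
  have [u' [Mu' Hu']] := Hred _ Hc Hn.
  case: Mu' => [E|[E|[E|E]]]; subst u'; rewrite ?/g1 ?/g2 ?/g3 ?/h reduces4E in Hu'.
  - by left.
  - by right; left.
  - by right; right; left.
  - by right; right; right.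
case: Mu => [E|[E|[E|E]]]; subst u.
- exists g1'; split; first by left.
  rewrite /g1' reduces3E; apply: r43; rewrite -reduces4E; exact: Hu.
- exists g2'; split; first by right; left.
  rewrite /g2' reduces3E; apply: r43; rewrite -reduces4E; exact: Hu.
- exists g3'; split; first by right; right.
  rewrite /g3' reduces3E; apply: r43; rewrite -reduces4E; exact: Hu.
rewrite /h reduces4E in Hu.
have [Hlt Hk3] := @hz h1%:Z h2%:Z h3%:Z h4%:Z x1 x2 x3 ltac:(lia) ltac:(lia) ltac:(lia) ltac:(lia) Spos Sneg Hu.
clear Hk Hk' Hnz Hc4 Hn4 Hu Hcard Spos Sneg.
case: Hk3 => [[nx eh]|[[nx eh]|[nx eh]]].
- exists g1'; split; first by left.
  rewrite /g1' reduces3E.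
  apply: (core1 a1%:Z a4%:Z c1%:Z c2%:Z c3%:Z v12%:Z v13%:Z v21%:Z v23%:Z v31%:Z v32%:Z
     h1%:Z h2%:Z h3%:Z h4%:Z x1 x2 x3) => //; try lia.
- exists g2'; split; first by right; left.
  rewrite /g2' reduces3E.
  apply: (core2 a2%:Z a4%:Z c1%:Z c2%:Z c3%:Z v12%:Z v13%:Z v21%:Z v23%:Z v31%:Z v32%:Z
     h1%:Z h2%:Z h3%:Z h4%:Z x1 x2 x3) => //; try lia.
- exists g3'; split; first by right; right.
  rewrite /g3' reduces3E.
  apply: (core3 a3%:Z a4%:Z c1%:Z c2%:Z c3%:Z v12%:Z v13%:Z v21%:Z v23%:Z v31%:Z v32%:Z
     h1%:Z h2%:Z h3%:Z h4%:Z x1 x2 x3) => //; try lia.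
Qed.
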